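(* Let $G=\langle X\mid\mathcal R\rangle$ be a group, $A,B\le G$ subgroups and $\phi:A\to B$ an isomorphism, and let $H=\langle X\cup\{t\}\mid\mathcal R,\ t^{-1}at=\phi(a)\ (a\in A)\rangle$ be the HNN-extension. Suppose $g_1\in G$ is not a proper power of any element of $G$. Then the image of $g_1$ in $H$ is a proper power in $H$ if and only if there exist $k\ge2$ and $g_2\in G$ such that $g_1$ is conjugate to $g_2^k$ in $H$.
   Context: An element $g$ of a group $K$ is a proper power in $K$ if $g=h^k$ for some $h\in K$ and some integer $k\ge2$. *)

(* Defs.v *)
From mathcomp Require Import all_boot.
Set Implicit Arguments. Unset Strict Implicit. Unset Printing Implicit Defensive.
Local Open Scope group_scope.

Definition is_subgroup (G : groupType) (A : G -> Prop) : Prop :=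
  A 1 /\ (forall x y, A x -> A y -> A (x * y^-1)).

Definition is_hom (G K : groupType) (f : G -> K) : Prop :=
  forall x y, f (x * y) = f x * f y.

Definition is_iso_on (G : groupType) (A B : G -> Prop) (phi : G -> G) : Prop :=
  [/\ (forall a, A a -> B (phi a)),
      (forall a b, A a -> A b -> phi (a * b) = phi a * phi b),
      (forall a b, A a -> A b -> phi a = phi b -> a = b)
    & (forall b, B b -> exists2 a, A a & phi a = b)].

(* (H, iota, t) is the HNN-extension of G with stable letter t associated to
   phi : A -> B, i.e. H = < G, t | t^-1 a t = phi(a) (a in A) >; characterised
   by the universal property of this presentation: iota : G -> H is the
   canonical map, and H is the universal group generated by a homomorphic
   image of G and an element t subject to the relations t^-1 a t = phi a. *)
Definition is_HNN_extension (G : groupType) (A : G -> Prop) (phi : G -> G)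
    (H : groupType) (iota : G -> H) (t : H) : Prop :=
  [/\ is_hom iota,
      (forall a, A a -> t^-1 * iota a * t = iota (phi a))
    & (forall (K : groupType) (f : G -> K) (s : K),
          is_hom f ->
          (forall a, A a -> s^-1 * f a * s = f (phi a)) ->
          exists! F : H -> K, [/\ is_hom F, (forall g, F (iota g) = f g) & F t = s])].

Definition proper_power (K : groupType) (g : K) : Prop :=
  exists (h : K) (k : nat), (2 <= k)%N /\ g = h ^+ k.

(* Main.v *)
Require Import Defs.
From mathcomp Require Import all_boot.
From HB Require Import structures.
From mathcomp Require Import boolp.
Set Implicit Arguments. Unset Strict Implicit. Unset Printing Implicit Defensive.
Local Open Scope group_scope.

Record sym (Y : Type) := Sym { sf : Y -> Y; sg : Y -> Y; sK : cancel sf sg; sKV : cancel sg sf }.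

Section SymG.
Variable Y : Type.
Lemma sym_eq (p q : sym Y) : sf p =1 sf q -> p = q.
Proof.
case: p q => f g K KV [f' g' K' KV'] /= /funext E; subst f'.
have Eg : g = g'.
  by apply/funext=> y; rewrite -{1}[y]KV' K.
subst g'; congr Sym; apply: Prop_irrelevance.
Qed.
Lemma sym_mulK (p q : sym Y) : cancel (sf p \o sf q) (sg q \o sg p).
Proof. by move=> y /=; rewrite !sK. Qed.
Lemma sym_mulKV (p q : sym Y) : cancel (sg q \o sg p) (sf p \o sf q).
Proof. by move=> y /=; rewrite !sKV. Qed.
Definition sym_mul (p q : sym Y) : sym Y := @Sym Y _ _ (sym_mulK p q) (sym_mulKV p q).
Definition sym_one : sym Y := @Sym Y id id (fun _ => erefl) (fun _ => erefl).
Definition sym_inv (p : sym Y) : sym Y := @Sym Y (sg p) (sf p) (@sKV _ p) (@sK _ p).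
HB.instance Definition _ := gen_eqMixin (sym Y).
HB.instance Definition _ := gen_choiceMixin (sym Y).
Lemma sym_mulA : associative sym_mul. Proof. by move=> *; apply: sym_eq. Qed.
Lemma sym_mul1 : left_id sym_one sym_mul. Proof. by move=> *; apply: sym_eq. Qed.
Lemma sym_mulr1 : right_id sym_one sym_mul. Proof. by move=> *; apply: sym_eq. Qed.
Lemma sym_mulV : left_inverse sym_one sym_inv sym_mul.
Proof. by move=> p; apply: sym_eq => y /=; rewrite sK. Qed.
Lemma sym_mulgV : right_inverse sym_one sym_inv sym_mul.
Proof. by move=> p; apply: sym_eq => y /=; rewrite sKV. Qed.
HB.instance Definition _ := isGroup.Build (sym Y) sym_mulA sym_mul1 sym_mulr1 sym_mulV sym_mulgV.
End SymG.

Lemma sfM (Y : Type) (p q : sym Y) y : sf (p * q) y = sf p (sf q y).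
Proof. by []. Qed.
Lemma sfV (Y : Type) (p : sym Y) y : sf (p^-1) y = sg p y.
Proof. by []. Qed.

Section HNN.
Variables (G : groupType) (A B : G -> Prop) (phi : G -> G) (H : groupType) (iota : G -> H) (t : H).
Hypotheses (sA : is_subgroup A) (sB : is_subgroup B) (iso : is_iso_on A B phi)
  (hnn : is_HNN_extension A phi iota t).

Lemma sub1 (S : G -> Prop) : is_subgroup S -> S 1.
Proof. by case. Qed.
Lemma subV (S : G -> Prop) x : is_subgroup S -> S x -> S x^-1.
Proof. by case=> S1 SM Sx; have := SM 1 x S1 Sx; rewrite mul1g. Qed.
Lemma subM (S : G -> Prop) x y : is_subgroup S -> S x -> S y -> S (x * y).
Proof. move=> sS Sx Sy; have := (proj2 sS) x y^-1 Sx (subV sS Sy); by rewrite invgK. Qed.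
Lemma subMl (S : G -> Prop) x y : is_subgroup S -> S x -> S (x * y) = S y.
Proof.
move=> sS Sx; apply: propext; split=> [Sxy|]; last exact: subM.
by rewrite -[y](mulKg x); apply: subM => //; apply: subV.
Qed.

Lemma iotaM x y : iota (x * y) = iota x * iota y.
Proof. by case: hnn => h _ _; apply: h. Qed.
Lemma iota1 : iota 1 = 1.
Proof. by apply: (@mulgI _ (iota 1)); rewrite -iotaM !mulg1. Qed.
Lemma iotaV x : iota x^-1 = (iota x)^-1.
Proof. by apply: (@mulgI _ (iota x)); rewrite -iotaM !mulgV iota1. Qed.
Lemma iotaX x n : iota (x ^+ n) = iota x ^+ n.
Proof. by elim: n => [|n IH]; rewrite ?iota1 // !expgS iotaM IH. Qed.
Lemma iota_rel a : A a -> t^-1 * iota a * t = iota (phi a).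
Proof. by case: hnn => _ h _; apply: h. Qed.

Definition T (e : bool) := if e then t else t^-1.
Lemma TV e : (T e)^-1 = T (~~ e).
Proof. by case: e; rewrite /T ?invgK. Qed.

Definition evl (M : seq (G * bool)) : H := foldr (fun u acc => iota u.1 * T u.2 * acc) 1 M.
Lemma evl_cons u M : evl (u :: M) = iota u.1 * T u.2 * evl M. Proof. by []. Qed.
Lemma evl_cat M N : evl (M ++ N) = evl M * evl N.
Proof. by elim: M => [|u M IH] /=; rewrite ?mul1g // IH !mulgA. Qed.

Definition S0 (h : H) := exists M y, h = evl M * iota y.
Lemma S0_iota g h : S0 h -> S0 (iota g * h).
Proof.
case=> [[|u M] [y ->]]; first by exists [::], (g * y); rewrite /= !mul1g iotaM.
by exists ((g * u.1, u.2) :: M), y; rewrite !evl_cons iotaM !mulgA.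
Qed.
Lemma S0_T e h : S0 h -> S0 (T e * h).
Proof.
by case=> [M [y ->]]; exists ((1, e) :: M), y; rewrite evl_cons iota1 mul1g mulgA.
Qed.
Lemma S0_iotaE g h : S0 (iota g * h) = S0 h.
Proof.
apply: propext; split; last exact: S0_iota.
by move=> /(S0_iota g^-1); rewrite mulgA -iotaM mulVg iota1 mul1g.
Qed.
Lemma S0_TE e h : S0 (T e * h) = S0 h.
Proof.
apply: propext; split; last exact: S0_T.
by move=> /(S0_T (~~ e)); rewrite mulgA -TV mulVg mul1g.
Qed.

Lemma LmK (h : H) : cancel (fun p : H * bool => (h * p.1, p.2)) (fun p => (h^-1 * p.1, p.2)).
Proof. by case=> y b /=; rewrite mulKg. Qed.
Lemma LmKV (h : H) : cancel (fun p : H * bool => (h^-1 * p.1, p.2)) (fun p => (h * p.1, p.2)).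
Proof. by case=> y b /=; rewrite mulVKg. Qed.
Definition Lm (h : H) : sym (H * bool) := Sym (LmK h) (LmKV h).
Lemma Lm_hom : is_hom Lm.
Proof. by move=> x y; apply: sym_eq => -[p b] /=; rewrite mulgA. Qed.
Definition tauf (p : H * bool) := (p.1, p.2 (+) ~~ `[< S0 p.1 >]).
Lemma tauK : cancel tauf tauf.
Proof. by case=> y b; rewrite /tauf /= -addbA addbb addbF. Qed.
Definition tau : sym (H * bool) := Sym tauK tauK.

Lemma generation (h : H) : S0 h.
Proof.
case: hnn => _ _ /(_ _ (Lm \o iota) (Lm t)) U.
have h1 : is_hom (Lm \o iota) by move=> x y /=; rewrite iotaM Lm_hom.
have h2 : forall a, A a -> (Lm t)^-1 * (Lm \o iota) a * Lm t = (Lm \o iota) (phi a).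
  move=> a Aa; apply: sym_eq => -[y b] /=.
  by rewrite !mulgA -(iota_rel Aa).
have [F0 [_ uniq]] := U h1 h2.
have key : forall x, (forall y, S0 (x * y) = S0 y) -> tau * Lm x * tau = Lm x.
  move=> x Sx; apply: sym_eq => -[y b] /=.
  by rewrite /tauf /= Sx -addbA addbb addbF.
have E1 : F0 = Lm by apply: uniq; split=> //; exact: Lm_hom.
have E2 : F0 = (fun h => tau * Lm h * tau).
  apply: uniq; split.
  - move=> x y; rewrite Lm_hom.
    have tt : tau * tau = 1 by apply: sym_eq => p /=; rewrite tauK.
    by rewrite !mulgA -[tau * Lm x * tau * tau]mulgA tt mulg1.
  - by move=> g /=; rewrite key // => y; rewrite S0_iotaE.
  - by rewrite key // => y; rewrite -[t]/(T true) S0_TE.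
have := congr1 (fun F => sf (F h) (1, false)) (etrans (esym E1) E2) => /=.
rewrite /tauf /= mulg1.
have -> : `[< S0 1 >] = true.
  by apply/asboolP; exists [::], 1; rewrite iota1 mulg1.
by case=> /esym /= /negbFE /asboolP.
Qed.

Definition pick (P : pred G) : G :=
  match pselect (exists x, P x) with left e => xchoose e | right _ => 1 end.
Lemma pickP (P : pred G) : (exists x, P x) -> P (pick P).
Proof. by rewrite /pick; case: pselect => // e _; apply: xchooseP. Qed.
Lemma eq_pick (P Q : pred G) : P =1 Q -> pick P = pick Q.
Proof. by move=> /funext ->. Qed.

Definition rep (S : G -> Prop) (x : G) : G :=
  if `[< S x >] then 1 else pick (fun r => `[< S (x * r^-1) >]).

Section Rep.
Variable S : G -> Prop.
Hypothesis sS : is_subgroup S.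
Lemma rep_in x : S (x * (rep S x)^-1).
Proof.
rewrite /rep; case: (asboolP (S x)) => [Sx|nSx]; first by rewrite invg1 mulg1.
set P := (fun r => `[< S (x * r^-1) >]).
have /asboolP // : P (pick P).
by apply: pickP; exists x; apply/asboolP; rewrite mulgV; apply: sub1.
Qed.
Lemma rep_inv s x : S s -> rep S (s * x) = rep S x.
Proof.
move=> Ss; rewrite /rep (subMl _ sS Ss); congr (if _ then _ else _).
by apply: eq_pick => r; rewrite -mulgA (subMl _ sS Ss).
Qed.
Lemma rep1 x : (rep S x = 1) <-> S x.
Proof.
split; last by rewrite /rep => Sx; case: asboolP.
by move=> E; have := rep_in x; rewrite E invg1 mulg1.
Qed.
Lemma rep_idem x : rep S (rep S x) = rep S x.
Proof.
have Ss := subV sS (rep_in x).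
have E : rep S x = (x * (rep S x)^-1)^-1 * x by rewrite invgM invgK -mulgA mulVg mulg1.
by rewrite {1}E rep_inv.
Qed.
End Rep.

Definition S (e : bool) := if e then B else A.
Lemma sS e : is_subgroup (S e). Proof. by case: e. Qed.

Definition psi (b : G) : G := pick (fun a => `[< A a /\ phi a = b >]).
Lemma psiP b : B b -> A (psi b) /\ phi (psi b) = b.
Proof.
move=> Bb; set P := (fun a => `[< A a /\ phi a = b >]).
have /asboolP // : P (pick P).
apply: pickP; case: iso => _ _ _ /(_ b Bb) [a Aa E].
by exists a; apply/asboolP.
Qed.
Lemma phiM a b : A a -> A b -> phi (a * b) = phi a * phi b.
Proof. by case: iso => _ h _ _; apply: h. Qed.
Lemma phiA a : A a -> B (phi a).
Proof. by case: iso => h _ _ _; apply: h. Qed.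
Lemma phi_inj a b : A a -> A b -> phi a = phi b -> a = b.
Proof. by case: iso => _ _ h _; apply: h. Qed.
Lemma psi_phi a : A a -> psi (phi a) = a.
Proof.
move=> Aa; have [Ap Ep] := psiP (phiA Aa); exact: phi_inj.
Qed.

Definition cj (e : bool) (x : G) := if e then psi x else phi x.
Lemma cj_S e x : S e x -> S (~~ e) (cj e x).
Proof. by case: e => /= Sx; [case: (psiP Sx) | apply: phiA]. Qed.
Lemma cj_K e x : S e x -> cj (~~ e) (cj e x) = x.
Proof. by case: e => /= Sx; [case: (psiP Sx) | apply: psi_phi]. Qed.
Lemma cjM e x y : S e x -> S e y -> cj e (x * y) = cj e x * cj e y.
Proof.
case: e => /= Sx Sy; last exact: phiM.
have [Ax Ex] := psiP Sx; have [Ay Ey] := psiP Sy.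
have [Axy Exy] := psiP (subM sB Sx Sy).
by apply: phi_inj => //; [exact: subM | rewrite phiM // Ex Ey].
Qed.
Lemma cj_rel e x : S e x -> T e * iota x = iota (cj e x) * T e.
Proof.
case: e => /= Sx; last by rewrite /T -(iota_rel Sx) mulgK.
have [Ap Ep] := psiP Sx.
by rewrite /T -{1}Ep -(iota_rel Ap) !mulgA mulgV mul1g.
Qed.

Fixpoint nl (l : seq (bool * G)) : Prop :=
  match l with
  | [::] => True
  | (e, g) :: l' => [/\ rep (S e) g = g,
                       (g = 1 -> match l' with (e', _) :: _ => e' <> ~~ e | [::] => True end)
                     & nl l']
  end.

Definition actT (e : bool) (w : G * seq (bool * G)) : G * seq (bool * G) :=
  let r := rep (S e) w.1 in
  let x := cj e (w.1 * r^-1) in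
  match w.2 with
  | (e', g1) :: l' => if (r == 1) && (e' == ~~ e) then (x * g1, l') else (x, (e, r) :: w.2)
  | [::] => (x, [:: (e, r)])
  end.

Lemma actT_nl e w : nl w.2 -> nl (actT e w).2.
Proof.
case: w => g0 l /= Nl; rewrite /actT /=.
case: l Nl => [|[e' g1] l'] /=.
  by split=> //; apply: rep_idem; apply: sS.
case=> R1 N1 Nl'.
case: ifP => [_ //|/negbT]; rewrite negb_and => H1.
split; [by apply: rep_idem; apply: sS | | by split].
by move=> E; move: H1; rewrite E eqxx /= => /eqP.
Qed.

Definition head_is (e : bool) (l : seq (bool * G)) :=
  if l is (e', _) :: _ then e' == e else false.

Lemma actT_nm e g0 l : ~~ ((rep (S e) g0 == 1) && head_is (~~ e) l) ->
  actT e (g0, l) = (cj e (g0 * (rep (S e) g0)^-1), (e, rep (S e) g0) :: l).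
Proof. by move=> h; rewrite /actT /=; case: l h => [|[e1 g1] l1] //= /negbTE ->. Qed.

Lemma actT_m e e' g0 g1 l : rep (S e) g0 = 1 -> e' = ~~ e ->
  actT e (g0, (e', g1) :: l) = (cj e g0 * g1, l).
Proof. by move=> r1 ->; rewrite /actT /= r1 !eqxx /= invg1 mulg1. Qed.

Lemma actTK e w : nl w.2 -> actT (~~ e) (actT e w) = w.
Proof.
case: w => g0 l /= Nl.
have Ss := rep_in (sS e) g0.
have Sx := cj_S Ss.
case: (boolP ((rep (S e) g0 == 1) && head_is (~~ e) l)) => [/andP[/eqP r1 hd]|nm].
  case: l Nl hd => [|[e' g1] l'] //= [R1 N1 Nl'] /eqP Ee; subst e'.
  have Sg0 : S e g0 := proj1 (rep1 (sS e) g0) r1.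
  have Sx0 := cj_S Sg0.
  rewrite actT_m // actT_nm.
    by rewrite (rep_inv (sS _) _ Sx0) R1 mulgK cj_K.
  rewrite (rep_inv (sS _) _ Sx0) R1 negbK.
  case: (eqVneq g1 1) => [g11|] //=.
  case: l' N1 Nl' => [|[e2 g2] l2] //= N1 _.
  by apply/eqP => E2; apply: (N1 g11); rewrite E2 negbK.
rewrite (actT_nm nm) actT_m ?negbK //; last exact/(rep1 (sS _)).
by rewrite cj_K // mulgVK.
Qed.

Lemma hom1 (K1 K2 : groupType) (f : K1 -> K2) : is_hom f -> f 1 = 1.
Proof. by move=> hf; apply: (@mulgI _ (f 1)); rewrite -hf !mulg1. Qed.
Lemma homV (K1 K2 : groupType) (f : K1 -> K2) x : is_hom f -> f x^-1 = (f x)^-1.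
Proof. by move=> hf; apply: (@mulgI _ (f x)); rewrite -hf !mulgV hom1. Qed.

Definition Om := {w : G * seq (bool * G) | nl w.2}.
Lemma Oeq (u v : Om) : sval u = sval v -> u = v.
Proof. by case: u v => u pu [v pv] /= E; subst v; congr exist; apply: Prop_irrelevance. Qed.

Definition OactG (g : G) (w : Om) : Om := exist _ (g * (sval w).1, (sval w).2) (svalP w).
Definition OactT (e : bool) (w : Om) : Om := exist _ (actT e (sval w)) (actT_nl e (svalP w)).
Lemma OactGK g : cancel (OactG g) (OactG g^-1).
Proof. by move=> [[a b] p]; apply: Oeq => /=; rewrite mulKg. Qed.
Lemma OactGKV g : cancel (OactG g^-1) (OactG g).
Proof. by move=> [[a b] p]; apply: Oeq => /=; rewrite mulVKg. Qed.
Lemma OactTK e : cancel (OactT e) (OactT (~~ e)).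
Proof. by move=> w; apply: Oeq => /=; apply: actTK; exact: (svalP w). Qed.
Definition symG g : sym Om := Sym (OactGK g) (OactGKV g).
Definition symT : sym Om := Sym (OactTK true) (OactTK false).

Lemma symG_hom : is_hom symG.
Proof. by move=> x y; apply: sym_eq => w; apply: Oeq => /=; rewrite mulgA. Qed.

Lemma rel_Om a : A a -> symT^-1 * symG a * symT = symG (phi a).
Proof.
move=> Aa; apply: sym_eq => -[[g0 l] Nl]; apply: Oeq => /=.
have Ss := rep_in (sS true) g0.
case: (boolP ((rep (S true) g0 == 1) && head_is (~~ true) l)) => [/andP[/eqP r1 hd]|nm].
  case: l Nl hd => [|[e' g1] l'] //= [R1 N1 Nl'] /eqP Ee; subst e'.
  have Sg0 : B g0 := proj1 (rep1 (sS true) g0) r1.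
  have [Ap Ep] := psiP Sg0.
  rewrite actT_m //= actT_nm.
    rewrite mulgA (rep_inv (sS false) _ (subM sA Aa Ap)) R1 mulgK /=.
    by rewrite phiM // Ep.
  rewrite mulgA (rep_inv (sS false) _ (subM sA Aa Ap)) R1.
  case: (eqVneq g1 1) => [g11|] //=.
  case: l' N1 Nl' => [|[e2 g2] l2] //= N1 _.
  by apply/eqP => E2; apply: (N1 g11); rewrite E2.
rewrite (actT_nm nm) /=.
have [Ap Ep] := psiP Ss.
rewrite actT_m //; last first.
  by apply/(rep1 (sS false)); apply: subM.
by rewrite /= phiM // Ep mulgA mulgVK.
Qed.

Definition w0 : Om := exist _ (1, [::]) I.

Definition pinchb (u v : G * bool) := (v.2 == ~~ u.2) && `[< S u.2 v.1 >].
Definition R (u v : G * bool) := ~~ pinchb u v.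
Definition red (M : seq (G * bool)) := sorted R M.

Lemma red_g g g' e M : red ((g, e) :: M) = red ((g', e) :: M).
Proof. by case: M. Qed.

Section Britton.
Variable F : H -> sym Om.
Hypotheses (Fhom : is_hom F) (Fiota : forall g, F (iota g) = symG g) (Ft : F t = symT).
Definition act h w := sf (F h) w.
Lemma actM x y w : act (x * y) w = act x (act y w).
Proof. by rewrite /act Fhom. Qed.
Lemma act_iota g w : sval (act (iota g) w) = (g * (sval w).1, (sval w).2).
Proof. by rewrite /act Fiota. Qed.
Lemma act_T e w : sval (act (T e) w) = actT e (sval w).
Proof. by case: e; rewrite /act /T ?(homV _ Fhom) Ft. Qed.

Lemma britton_aux e M y : red ((1, e) :: M) ->
  exists x r l, sval (act (T e * evl M * iota y) w0) = (x, (e, r) :: l) /\ S (~~ e) x.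
Proof.
elim: M e => [|[g' e'] M IH] e /=.
  move=> _; rewrite mulg1 actM act_T act_iota /= mulg1 /actT /=.
  by do 3 eexists; split; [reflexivity | apply: cj_S; apply: rep_in; apply: sS].
move=> /andP[Rp red'].
have [x [r [l [E Sx]]]] := IH e' (etrans (red_g 1 g' e' M) red').
have -> : T e * (iota g' * T e' * evl M) * iota y = T e * (iota g' * (T e' * evl M * iota y)).
  by rewrite !mulgA.
rewrite actM act_T actM act_iota E /=.
have nm : ~~ ((rep (S e) (g' * x) == 1) && head_is (~~ e) ((e', r) :: l)).
  apply/negP => /andP[/eqP r1 /= /eqP Ee]; subst e'.
  move: Rp; rewrite /R /pinchb /= eqxx /=; move/asboolPn; apply.
  move/(rep1 (sS e)): r1; rewrite negbK in Sx.
  by move=> h; rewrite -[g'](mulgK x); exact: subM (sS e) h (subV (sS e) Sx).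
rewrite (actT_nm nm); do 3 eexists; split; first reflexivity.
by apply: cj_S; apply: rep_in; apply: sS.
Qed.
End Britton.

Lemma getF : exists F : H -> sym Om,
  [/\ is_hom F, forall g, F (iota g) = symG g & F t = symT].
Proof.
case: hnn => _ _ /(_ _ symG symT symG_hom rel_Om) [F [[h1 h2 h3] _]].
by exists F.
Qed.

Lemma britton M y g : red M -> M != [::] -> evl M * iota y <> iota g.
Proof.
case: M => [|[g1 e1] M'] // Rd _ E.
have [F [Fh Fi Ft]] := getF.
have [x [r [l [E1 _]]]] := britton_aux Fh Fi Ft y (etrans (red_g 1 g1 e1 M') Rd).
have := congr1 (fun h => sval (act F h w0)) E => /=.
have -> : iota g1 * T e1 * evl M' * iota y = iota g1 * (T e1 * evl M' * iota y).
  by rewrite !mulgA.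
rewrite actM // act_iota // E1 act_iota //.
Qed.

Lemma T_rel e x : S e x -> T e * iota x * T (~~ e) = iota (cj e x).
Proof. by move=> Sx; rewrite cj_rel // -TV mulgK. Qed.

Lemma R_l u v w : u.2 = v.2 -> R u w = R v w.
Proof. by rewrite /R /pinchb => ->. Qed.

Lemma wmul x M y : exists M' y', size M' = size M /\ iota x * (evl M * iota y) = evl M' * iota y'.
Proof.
case: M => [|[g e] M]; first by exists [::], (x * y); rewrite /= !mul1g iotaM.
by exists ((x * g, e) :: M), y; rewrite /= iotaM !mulgA.
Qed.

Lemma shorten M y : ~~ red M -> exists M' y', size M' < size M /\ evl M * iota y = evl M' * iota y'.
Proof.
elim: M y => [|[g1 e1] M IH] y //.
case: M IH => [|[g2 e2] M2] IH //.
rewrite /red /= => /nandP [pn|nr].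
  move: pn; rewrite negbK /pinchb /= => /andP[/eqP E2 /asboolP Sg]; subst e2.
  have [M' [y' [Es Ee]]] := wmul (g1 * cj e1 g2) M2 y.
  exists M', y'; split; first by rewrite Es; apply: (leq_trans (leqnSn _)).
  rewrite -Ee iotaM -(T_rel Sg) /= !mulgA.
  done.
have [M' [y' [Es Ee]]] := IH y nr.
exists ((g1, e1) :: M'), y'; split; first by [].
by rewrite evl_cons -[_ * evl M' * iota y']mulgA -Ee /= !mulgA.
Qed.

Definition cred (L : seq (G * bool)) := if L is u :: L' then path R u (rcons L' u) else false.

Lemma evl_rcons L u : evl (rcons L u) = evl L * iota u.1 * T u.2.
Proof. by rewrite -cats1 evl_cat /= mulg1 mulgA. Qed.

Lemma cred_red L : cred L -> red L.
Proof. by case: L => [|u L] //=; rewrite rcons_path => /andP[]. Qed.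

Lemma R_refl u : R u u.
Proof. by rewrite /R /pinchb; case: u => g [] /=. Qed.

Lemma conj_comp (h X Y c1 c2 : H) : h ^ c1 = X -> X ^ c2 = Y -> h ^ (c1 * c2) = Y.
Proof. by move=> <- <-; rewrite conjgM. Qed.

Lemma cyc_red n M y : size M <= n ->
  (exists c g, (evl M * iota y) ^ c = iota g) \/ (exists c L, cred L /\ (evl M * iota y) ^ c = evl L).
Proof.
elim: n M y => [|n IH] M y.
  by case: M => // _; left; exists 1, y; rewrite conjg1 /= mul1g.
have sub : forall L0, size L0 <= n.+1 -> L0 != [::] ->
    (exists c g, (evl L0) ^ c = iota g) \/ (exists c L, cred L /\ (evl L0) ^ c = evl L).
  move=> L0 HL0 ne0.
  case: (boolP (red L0)) => [rd|nrd]; last first.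
    have [M' [y' [Es Ee]]] := shorten 1 nrd.
    rewrite iota1 mulg1 in Ee; rewrite Ee.
    by apply: IH; rewrite -ltnS; apply: leq_trans Es HL0.
  case: (boolP (cred L0)) => [cr|ncr].
    by right; exists 1, L0; rewrite conjg1.
  case: L0 ne0 HL0 rd ncr => [|v L1] // _ HL0 rd ncr.
  case/lastP: L1 HL0 rd ncr => [|L2 w] HL0 rd ncr.
    by move: ncr; rewrite /cred /= R_refl.
  move: ncr; rewrite /cred rcons_path last_rcons -[path _ _ _]/(red (v :: rcons L2 w)) rd /=.
  rewrite /R negbK /pinchb => /andP[/eqP Ev /asboolP Sv].
  have E1 : (evl (v :: rcons L2 w)) ^ (iota v.1 * T v.2) = evl L2 * iota (w.1 * cj w.2 v.1).
    rewrite conjgE evl_cons -[(_ * _ * evl _) * _]mulgA mulKg evl_rcons Ev iotaM -(T_rel Sv) !mulgA.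
    done.
  have := IH L2 (w.1 * cj w.2 v.1).
  case.
  - by move: HL0; rewrite /= size_rcons ltnS => /ltnW.
  - by case=> [c [g Ec]]; left; exists (iota v.1 * T v.2 * c), g; apply: conj_comp E1 Ec.
  - by case=> [c [L [CL Ec]]]; right; exists (iota v.1 * T v.2 * c), L; split=> //; apply: conj_comp E1 Ec.
case: M => [|[g1 e1] M1] Hs.
  by left; exists 1, y; rewrite conjg1 /= mul1g.
have E0 : (evl ((g1, e1) :: M1) * iota y) ^ (iota y^-1) = evl ((y * g1, e1) :: M1).
  by rewrite conjgE iotaV invgK mulgK /= iotaM !mulgA.
case: (sub ((y * g1, e1) :: M1) Hs isT) => [[c [g Ec]]|[c [L [CL Ec]]]].
  by left; exists (iota y^-1 * c), g; apply: conj_comp E0 Ec.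
by right; exists (iota y^-1 * c), L; split=> //; apply: conj_comp E0 Ec.
Qed.

Lemma path_g (a b : G) e (s : seq (G * bool)) : path R (a, e) s = path R (b, e) s.
Proof. by case: s. Qed.
Lemma last_snd (a b : G) (e : bool) (s : seq (G * bool)) : (last (a, e) s).2 = (last (b, e) s).2.
Proof. by case/lastP: s => // s u; rewrite !last_rcons. Qed.
Lemma red_cat2 s a b s2 : red (rcons s a ++ b :: s2) = [&& red (rcons s a), R a b & red (b :: s2)].
Proof.
case: s => [|x s] /=; first by [].
by rewrite cat_path last_rcons.
Qed.
Lemma red_rcons2 s a b : red (rcons (rcons s a) b) = red (rcons s a) && R a b.
Proof. by rewrite -cats1 red_cat2 /= andbT. Qed.

Lemma subMr (Sg : G -> Prop) x y : is_subgroup Sg -> Sg x -> Sg (y * x) = Sg y.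
Proof.
move=> sS Sx; apply: propext; split=> [Syx|Sy]; last exact: subM.
by rewrite -[y](mulgK x); apply: subM => //; apply: subV.
Qed.
Lemma S_inv e x : S e x^-1 = S e x.
Proof.
apply: propext; split=> [/(subV (sS e))|]; last exact: subV (sS e).
by rewrite invgK.
Qed.
Lemma R_mull u v x : S u.2 x -> R u (x * v.1, v.2) = R u v.
Proof. by move=> Sx; rewrite /R /pinchb /= (subMl _ (sS _) Sx). Qed.
Lemma R_mulr u v x : S (~~ v.2) x -> R u (v.1 * x, v.2) = R u v.
Proof.
move=> Sx; rewrite /R /pinchb /=; case: eqP => //= E.
by rewrite E negbK in Sx; rewrite (subMr _ (sS _) Sx).
Qed.

Fixpoint invw (M : seq (G * bool)) (y : G) : seq (G * bool) * G :=
  match M with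
  | [::] => ([::], y^-1)
  | (g, e) :: M' => (rcons (invw M' y).1 ((invw M' y).2, ~~ e), g^-1)
  end.

Lemma invw_ev M y : (evl M * iota y)^-1 = evl (invw M y).1 * iota (invw M y).2.
Proof.
elim: M => [|[g e] M IH] /=; first by rewrite !mul1g iotaV.
have -> : iota g * T e * evl M * iota y = (iota g * T e) * (evl M * iota y) by rewrite !mulgA.
by rewrite invgM IH invgM TV iotaV evl_rcons /= !mulgA.
Qed.

Lemma invw_red M y : red M -> red (invw M y).1.
Proof.
elim: M => [|[g e] M IH] //=.
case: M IH => [|[g' e'] M'] IH //= /andP[Rgg rd].
rewrite red_rcons2 IH //= => {IH rd}.
move: Rgg; rewrite /R /pinchb /= S_inv.
by case: e e' => -[].
Qed.

Definition mulf (x : G) (L : seq (G * bool)) :=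
  if L is u :: L' then (x * u.1, u.2) :: L' else [::].
Lemma evl_mulf x L : L != [::] -> evl (mulf x L) = iota x * evl L.
Proof. by case: L => [|u L] //= _; rewrite iotaM !mulgA. Qed.

Lemma collins0 y L g : cred L -> (evl L) ^ (iota y) <> iota g.
Proof.
case: L => [|[g1 e1] L1] // CL.
have rd := cred_red CL.
have -> : (evl ((g1, e1) :: L1)) ^ (iota y) = evl ((y^-1 * g1, e1) :: L1) * iota y.
  by rewrite conjgE /= iotaM iotaV !mulgA.
by apply: britton => //; rewrite /red /= (path_g _ g1).
Qed.

Lemma collins n m y L g : size m <= n -> cred L -> (evl L) ^ (evl m * iota y) <> iota g.
Proof.
elim: n m y L g => [|n IH] m y L g Hs CL.
  by case: m Hs => // _; rewrite /= mul1g; apply: collins0.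
case: m Hs => [|[c0 f1] m'] Hs; first by rewrite /= mul1g; apply: collins0.
case: (boolP (red ((c0, f1) :: m'))) => [rdm|nrd]; last first.
  have [M' [y' [Es Ee]]] := shorten y nrd.
  by rewrite Ee; apply: IH => //; rewrite -ltnS; apply: leq_trans Es Hs.
have Hs' : size m' <= n by [].
have Ec : evl ((c0, f1) :: m') * iota y = iota c0 * T f1 * (evl m' * iota y) by rewrite /= !mulgA.
case: L CL => [|[g1 e1] L1] // CL.
have rdL := cred_red CL.
have Rw : R (last (g1, e1) L1) (g1, e1) by move: CL; rewrite /cred /= rcons_path => /andP[].
case: (boolP (pinchb (c0, ~~ f1) (c0^-1 * g1, e1))) => pa;
  case: (boolP (pinchb (last (g1, e1) L1) (c0, f1))) => pb.
- exfalso; move: pa pb Rw; rewrite /R /pinchb /=.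
  set w := last _ _.
  move=> /andP[/eqP E1 /asboolP S1] /andP[/eqP F1 /asboolP S2] /negP; apply.
  rewrite negbK in E1; subst e1; rewrite F1 negbK in S1.
  rewrite F1 eqxx /=; apply/asboolP.
  by rewrite -[g1](mulVKg c0); apply: subM (sS _) S2 S1.
- move: pa; rewrite /pinchb /= => /andP[/eqP E1 /asboolP S1]; rewrite negbK in E1; subst e1.
  set z := cj (~~ f1) (c0^-1 * g1).
  have Sz : S f1 z by have := cj_S S1; rewrite negbK.
  have Eq : (evl ((g1, f1) :: L1)) ^ (iota c0 * T f1) = evl (mulf z (rcons L1 (c0, f1))).
    rewrite evl_mulf; last by case: L1 {Rw pb rdL CL}.
    rewrite evl_rcons /z -(T_rel S1) negbK iotaM conjgE invgM TV iotaV /= !mulgA.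
    done.
  rewrite Ec conjgM Eq; apply: IH Hs' _.
  case: L1 {Eq CL} rdL Rw pb => [|[g2 e2] L2] rdL Rw pb.
    by rewrite /cred /= R_refl.
  rewrite /cred /= !rcons_path last_rcons.
  move: rdL; rewrite /red /= => /andP[R12 p2].
  rewrite (path_g _ g2) p2 /=.
  rewrite (@R_l (last (z * g2, e2) L2) (last (g2, e2) L2)); last exact: last_snd.
  rewrite /R in pb *; rewrite pb /=.
  rewrite -/(R (c0, f1) (z * (g2, e2).1, (g2, e2).2)) R_mull //.
- rewrite Ec conjgM.
  case/lastP: L1 CL rdL Rw pb => [|L0 u] CL rdL Rw pb; rewrite ?last_rcons /= in Rw pb.
    move: pb; rewrite /pinchb /= => /andP[/eqP F1 /asboolP S2].
    have Sz := cj_S S2.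
    set z := cj _ c0 in Sz.
    set yy := c0^-1 * g1 * z.
    have Eq : (evl [:: (g1, e1)]) ^ (iota c0 * T f1) = (evl [:: (yy, e1)]) ^ (iota yy).
      rewrite /= !mulg1 !conjgE F1 invgM TV negbK -iotaV.
      rewrite -[iota yy * T e1 * iota yy]mulgA mulKg.
      by rewrite /yy !iotaM /z -(T_rel S2) !mulgA.
    rewrite Eq -conjgM.
    have [m'' [y'' [Es Ee]]] := wmul yy m' y.
    rewrite Ee; apply: IH; first by rewrite Es.
    by rewrite /cred /= R_refl.
  move: pb; rewrite /pinchb /= => /andP[/eqP F1 /asboolP S2].
  have Sz := cj_S S2.
  set z := cj _ c0 in Sz.
  set yy := u.1 * z.
  set L'' := (yy, u.2) :: (c0^-1 * g1, e1) :: L0.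
  have Eq : (evl ((g1, e1) :: rcons L0 u)) ^ (iota c0 * T f1) = (evl L'') ^ (iota yy).
    rewrite evl_cons evl_rcons /L'' !evl_cons !conjgE F1 invgM TV negbK -iotaV.
    rewrite /= -!mulgA mulKg /yy /z iotaM -(T_rel S2) !iotaM !mulgA.
    done.
  rewrite Eq -conjgM.
  have [m'' [y'' [Es Ee]]] := wmul yy m' y.
  rewrite Ee; apply: IH; first by rewrite Es.
  rewrite /cred /L'' /= rcons_path.
  move: rdL; rewrite /red /= rcons_path => /andP[p0 Rl].
  apply/and3P; split.
  - by move: pa; rewrite F1 negbK.
  - by rewrite (path_g _ g1).
  rewrite (@R_l _ (last (g1, e1) L0)); last exact: last_snd.
  rewrite /yy -[(u.1 * z, u.2)]/((u.1 * z, u.2)) R_mulr //.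
- rewrite conjgE invw_ev /=.
  set N := (invw m' y).1; set zz := (invw m' y).2.
  have Eq : evl (rcons N (zz, ~~ f1)) * iota c0^-1 * (evl ((g1, e1) :: L1) * (evl ((c0, f1) :: m') * iota y))
      = evl (rcons N (zz, ~~ f1) ++ (c0^-1 * g1, e1) :: (L1 ++ (c0, f1) :: m')) * iota y.
    rewrite (evl_cat (rcons N (zz, ~~ f1))).
    by rewrite !evl_cons evl_cat !evl_cons /= iotaM !mulgA.
  rewrite Eq; apply: britton; last by case: N {Eq}.
  rewrite red_cat2; apply/and3P; split.
  - by have := invw_red y rdm.
  - by [].
  have -> : red ((c0^-1 * g1, e1) :: L1 ++ (c0, f1) :: m') = red (((g1, e1) :: L1) ++ (c0, f1) :: m').
    by rewrite /red /= (path_g _ g1).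
  move: rdL pb; rewrite (lastI (g1, e1) L1) => rdL pb.
  by rewrite red_cat2 rdL /R pb rdm.
Qed.

Lemma rcons_pow (u : G * bool) L k :
  rcons (flatten (nseq k (u :: L))) u = u :: flatten (nseq k (rcons L u)).
Proof.
elim: k => [|k IH] //=.
by rewrite rcons_cat IH cat_rcons.
Qed.

Lemma path_pow u P k : path R u P -> last u P = u -> path R u (flatten (nseq k P)).
Proof.
move=> pP lP; elim: k => [|k IH] //=.
by rewrite cat_path pP lP IH.
Qed.

Lemma cred_pow L k : cred L -> 0 < k -> cred (flatten (nseq k L)).
Proof.
case: L => [|u L] // CL; case: k => [|k] // _.
have E := rcons_pow u L k.+1.
rewrite /= in E *.
have : rcons (L ++ flatten (nseq k (u :: L))) u = flatten (nseq k.+1 (rcons L u)).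
  by case: E.
move=> ->; apply: path_pow => //; exact: last_rcons.
Qed.

Lemma evl_pow L k : evl (flatten (nseq k L)) = evl L ^+ k.
Proof. by elim: k => [|k IH] //=; rewrite evl_cat IH expgS. Qed.

End HNN.

Unset Implicit Arguments.

Theorem corollary3p4 (G : groupType) (A B : G -> Prop) (phi : G -> G)
    (H : groupType) (iota : G -> H) (t : H) :
  is_subgroup A -> is_subgroup B -> is_iso_on A B phi ->
  is_HNN_extension A phi iota t ->
  forall g1 : G, ~ proper_power g1 ->
  (proper_power (iota g1) <->
   exists (k : nat) (g2 : G), (2 <= k)%N /\ exists c : H, (iota g1) ^ c = iota (g2 ^+ k)).
Proof.
move=> sA sB iso hnn g1 _; split.
  case=> h [k [k2 E]].
  have [M [y Eh]] := generation hnn h.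
  case: (cyc_red iso hnn y (leqnn (size M))) => [[c [g Ec]]|[c [L [CL Ec]]]].
    exists k, g; split=> //; exists c.
    by rewrite E conjXg Eh Ec (iotaX hnn).
  exfalso.
  have E2 : (iota g1) ^ c = evl iota t (flatten (nseq k L)).
    by rewrite evl_pow E conjXg Eh Ec.
  have [m [y' Em]] := generation hnn c^-1.
  have E3 : (evl iota t (flatten (nseq k L))) ^ (evl iota t m * iota y') = iota g1.
    by rewrite -Em -E2 conjgK.
  apply: (collins sA sB iso hnn (leqnn (size m)) _ E3).
  by apply: cred_pow => //; apply: leq_trans k2.
case=> k [g2 [k2 [c E]]].
exists ((iota g2) ^ c^-1), k; split=> //.
by rewrite -conjXg -(iotaX hnn) -E conjgK.
Qed.
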